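(* If a finite group $G$ is a $Q\sigma T$-group, then $G/R$ satisfies ${\bf Q}_{\sigma P}$ for every normal subgroup $R$ of $G$.
   Context: $\sigma=\{\sigma_i\mid i\in I\}$ is a partition of the set of all primes. A group is $\sigma$-primary if it is a $\sigma_i$-group for some $i$. $A_G$ is the core of $A$ in $G$. $A$ is $\sigma$-subnormal in $G$ if there is a chain $A=A_0\le\cdots\le A_n=G$ with, for each $i$, $A_{i-1}\trianglelefteq A_i$ or $A_i/(A_{i-1})_{A_i}$ $\sigma$-primary. $A$ is modular in $G$ if (1) $\langle X, A\cap Z\rangle=\langle X,A\rangle\cap Z$ for all $X\le Z\le G$, and (2) $\langle A, Y\cap Z\rangle=\langle A,Y\rangle\cap Z$ for all $Y,Z\le G$ with $A\le Z$. $A$ is $\sigma$-quasinormal if it is $\sigma$-subnormal and modular. $G$ is a $Q\sigma T$-group if whenever $H$ is $\sigma$-quasinormal in $K$ and $K$ is $\sigma$-quasinormal in $G$, $H$ is $\sigma$-quasinormal in $G$. A $P$-group of type $(p,q)$ is a group $A\rtimes\langle t\rangle$ with $A$ an elementary abelian $p$-group and $t$ of prime order $q\neq p$ inducing a non-trivial power automorphism (one fixing every subgroup) on $A$. A group $X$ satisfies ${\bf Q}_{\sigma(p,q)}$ if whenever $N$ is a soluble normal subgroup of $X$ and $P/N$ is a normal subgroup of $X/N$ that is $\sigma$-primary and a $P$-group of type $(p,q)$, every subgroup of $P/N$ is modular in $X/N$. $X$ satisfies ${\bf Q}_{\sigma P}$ if it satisfies ${\bf Q}_{\sigma(p,q)}$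 for every pair of primes $p,q$ for which a $P$-group of type $(p,q)$ exists. *)

(* Defs.v *)
From mathcomp Require Import all_boot all_fingroup all_solvable.
Set Implicit Arguments. Unset Strict Implicit. Unset Printing Implicit Defensive.
Local Open Scope group_scope.

(* A partition sigma = {sigma_i | i in I} of the set of all primes is encoded
   by a map [sigma : nat -> I] sending each prime p to the index i of the
   class sigma_i containing p (values on non-primes are irrelevant). *)

Section SigmaDefs.
Variables (I : Type) (sigma : nat -> I).
Variable gT : finGroupType.

Definition sigma_primary (A : {set gT}) : Prop :=
  exists i : I, forall p, p \in primes #|A| -> sigma p = i.

End SigmaDefs.

Inductive sigma_subnormal (I : Type) (sigma : nat -> I) (gT : finGroupType)
  : {group gT} -> {group gT} -> Prop :=
| ssn_refl (G : {group gT}) : sigma_subnormal sigma G G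
| ssn_step (A B G : {group gT}) :
    A \subset B ->
    (A <| B \/ sigma_primary sigma (B / gcore A B)) ->
    sigma_subnormal sigma B G -> sigma_subnormal sigma A G.

Definition modular (gT : finGroupType) (A G : {group gT}) : Prop :=
  A \subset G /\
  (forall X Z : {group gT}, X \subset Z -> Z \subset G ->
     X <*> (A :&: Z) = (X <*> A) :&: Z) /\
  (forall Y Z : {group gT}, Y \subset G -> Z \subset G -> A \subset Z ->
     A <*> (Y :&: Z) = (A <*> Y) :&: Z).

Definition sigma_quasinormal (I : Type) (sigma : nat -> I) (gT : finGroupType)
  (A G : {group gT}) : Prop :=
  sigma_subnormal sigma A G /\ modular A G.

Definition QsigmaT (I : Type) (sigma : nat -> I) (gT : finGroupType)
  (G : {group gT}) : Prop :=
  forall H K : {group gT},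
    sigma_quasinormal sigma H K -> sigma_quasinormal sigma K G ->
    sigma_quasinormal sigma H G.

(* P is a P-group of type (p,q): P = A ><| <[t]> with A an elementary abelian
   p-group and t of prime order q <> p inducing a non-trivial power
   automorphism (fixing every subgroup) on A. *)
Definition Pgroup_type (gT : finGroupType) (p q : nat) (P : {set gT}) : Prop :=
  exists (A : {group gT}) (t : gT),
    p.-abelem A /\ prime q /\ q != p /\ #[t] = q /\
    A ><| <[t]> = P /\
    (forall B : {group gT}, B \subset A -> t \in 'N(B)) /\
    ~~ (t \in 'C(A)).

Definition Q_sigma_pq (I : Type) (sigma : nat -> I) (p q : nat)
  (gT : finGroupType) (X : {group gT}) : Prop :=
  forall (N : {group gT}) (Pb : {group coset_of N}),
    N <| X -> solvable N ->
    Pb <| X / N -> sigma_primary sigma Pb -> Pgroup_type p q Pb ->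
    forall Hb : {group coset_of N}, Hb \subset Pb -> modular Hb (X / N)%G.

(* X satisfies Q_{sigma P}. Q_{sigma(p,q)} holds vacuously when no P-group of
   type (p,q) exists, so quantifying over all p, q is the same. *)
Definition Q_sigma_P (I : Type) (sigma : nat -> I) (gT : finGroupType)
  (X : {group gT}) : Prop :=
  forall p q : nat, Q_sigma_pq sigma p q X.

(* Main.v *)
Require Import Defs.
From mathcomp Require Import all_boot all_fingroup all_solvable zify.
Set Implicit Arguments. Unset Strict Implicit. Unset Printing Implicit Defensive.
Local Open Scope group_scope.

Lemma normal_modular (gT : finGroupType) (H G : {group gT}) :
  H <| G -> modular H G.
Proof.
case/andP=> sHG nHG; split=> //; split.
- move=> X Z sXZ sZG.
  have sXG := subset_trans sXZ sZG.
  have nHX : X \subset 'N(H) := subset_trans sXG nHG.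
  have nHZX : X \subset 'N(H :&: Z).
    by rewrite normsI // (subset_trans sXZ (normG Z)).
  by rewrite (norm_joinEl nHZX) (norm_joinEl nHX) group_modl.
- move=> Y Z sYG sZG sHZ.
  have nYZ : (Y :&: Z) \subset 'N(H).
    exact: subset_trans (subsetIl _ _) (subset_trans sYG nHG).
  by rewrite (norm_joinEr nYZ) (norm_joinEr (subset_trans sYG nHG)) group_modl.
Qed.

Lemma quot_modular (gT : finGroupType) (M H G : {group gT}) :
  M <| G -> M \subset H -> modular H G -> modular (H / M)%G (G / M)%G.
Proof.
move=> nsMG sMH [sHG [m1 m2]].
have nMG := normal_norm nsMG.
have preG : forall Xb : {group coset_of M}, Xb \subset G / M ->
   coset M @*^-1 Xb \subset G.
  by move=> Xb sXb; rewrite -(quotientGK nsMG) morphpreS.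
have preN : forall Xb : {group coset_of M}, Xb \subset G / M ->
   coset M @*^-1 Xb \subset 'N(M).
  by move=> Xb sXb; rewrite (subset_trans (preG Xb sXb)).
have preM : forall Xb : {group coset_of M}, M \subset coset M @*^-1 Xb.
  by move=> Xb; rewrite -{1}(ker_coset M) ker_sub_pre.
have nHM : H \subset 'N(M) := subset_trans sHG nMG.
split; first exact: quotientS.
split.
- move=> Xb Zb sXZ sZG /=.
  have sXG := subset_trans sXZ sZG.
  have := congr1 (fun A => A / M)
    (m1 [group of coset M @*^-1 Xb] [group of coset M @*^-1 Zb]
        (morphpreS _ sXZ) (preG _ sZG)).
  have nI : H :&: coset M @*^-1 Zb \subset 'N(M).
    exact: subset_trans (subsetIl _ _) nHM.
  rewrite /= ?quotientIG ?preM // !quotientY ?quotientIG ?cosetpreK ?preN ?preM ?nHM ?nI //.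
- move=> Yb Zb sYG sZG sHZ /=.
  have sHZ' : H \subset coset M @*^-1 Zb.
    by rewrite -sub_quotient_pre.
  have := congr1 (fun A => A / M)
    (m2 [group of coset M @*^-1 Yb] [group of coset M @*^-1 Zb]
        (preG _ sYG) (preG _ sZG) sHZ').
  have nI : coset M @*^-1 Yb :&: coset M @*^-1 Zb \subset 'N(M).
    exact: subset_trans (subsetIl _ _) (preN _ sYG).
  have nY := preN _ sYG.
  rewrite /= quotientIG ?preM // quotientY // quotientY // quotientIG ?preM //.
  by rewrite !cosetpreK.
Qed.

Lemma joinSS (gT : finGroupType) (A B C D : {set gT}) :
  A \subset C -> B \subset D -> A <*> B \subset C <*> D.
Proof.
move=> sAC sBD; rewrite join_subG.
by rewrite (subset_trans sAC (joing_subl _ _)) (subset_trans sBD (joing_subr _ _)).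
Qed.

Lemma small_modular (gT : finGroupType) (H K M : {group gT}) :
  M <| K -> M \subset H -> H \subset K ->
  (forall X Z : {group gT}, M \subset X -> X \subset Z -> Z \subset K ->
     X :=: M \/ X :=: Z \/ Z :=: K) ->
  modular H K.
Proof.
move=> nsMK sMH sHK chain.
have nMK := normal_norm nsMK.
split=> //; split.
- move=> X Z sXZ sZK.
  have sXK := subset_trans sXZ sZK.
  pose X1 := (X <*> M)%G; pose Z1 := (Z <*> M)%G.
  have sMX1 : M \subset X1 by exact: joing_subr.
  have sX1Z1 : X1 \subset Z1 by apply: joinSS.
  have sZ1K : Z1 \subset K by rewrite join_subG sZK normal_sub.
  have claim : X1 <*> (H :&: Z1) = (X1 <*> H) :&: Z1.
    have [E|[E|E]] := chain X1 Z1 sMX1 sX1Z1 sZ1K.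
    + have sMHZ : M \subset H :&: Z1.
        by rewrite subsetI sMH (subset_trans sMX1 sX1Z1).
      by rewrite E (joing_idPr sMHZ) (joing_idPr sMH).
    + rewrite E (joing_idPl (subsetIr H Z1)).
      by apply/esym/setIidPr; exact: joing_subl.
    + rewrite E (setIidPl sHK); apply/esym/setIidPl.
      by rewrite join_subG sHK -E sX1Z1.
  apply/eqP; rewrite eqEsubset; apply/andP; split.
    rewrite join_subG subsetI joing_subl sXZ /=.
    by rewrite setSI // joing_subr.
  pose Y := (X <*> (H :&: Z))%G.
  have sYZ : Y \subset Z by rewrite join_subG sXZ subsetIr.
  have nMY : Y \subset 'N(M) := subset_trans (subset_trans sYZ sZK) nMK.
  have s1 : (X <*> H) :&: Z \subset (X1 <*> (H :&: Z1)) :&: Z.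
    rewrite claim subsetI subsetIr andbT setISS //.
      by rewrite joinSS ?joing_subl.
    exact: joing_subl.
  apply: subset_trans s1 _.
  have s2 : X1 <*> (H :&: Z1) \subset Y <*> M.
    rewrite join_subG; apply/andP; split.
      by apply: joinSS => //; exact: joing_subl.
    rewrite /Z1 /= (norm_joinEl (subset_trans sZK nMK)) -group_modr //.
    rewrite (norm_joinEl nMY) mulSg //; exact: joing_subr.
  apply: subset_trans (setSI _ s2) _.
  rewrite (norm_joinEl nMY) -group_modl //.
  rewrite mulG_subG subxx /=.
  apply: subset_trans (joing_subr X _).
  by rewrite setSI.
- move=> Y Z sYK sZK sHZ.
  have nMY : Y \subset 'N(M) := subset_trans sYK nMK.
  pose Y1 := (Y <*> M)%G.
  have sMY1 : M \subset Y1 by exact: joing_subr.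
  have sY1K : Y1 \subset K by rewrite join_subG sYK normal_sub.
  have sMZ := subset_trans sMH sHZ.
  have claim : H <*> (Y1 :&: Z) = (H <*> Y1) :&: Z.
    have [E|[E|E]] := chain H Z sMH sHZ sZK.
    + have sMYZ : M \subset Y1 :&: Z by rewrite subsetI sMY1.
      by rewrite E (joing_idPr sMYZ) (joing_idPr sMY1).
    + rewrite E (joing_idPl (subsetIr Y1 Z)).
      by apply/esym/setIidPr; exact: joing_subl.
    + rewrite E (setIidPl sY1K); apply/esym/setIidPl.
      by rewrite join_subG sY1K -E sHZ.
  apply/eqP; rewrite eqEsubset; apply/andP; split.
    rewrite join_subG subsetI joing_subl sHZ /=.
    by rewrite setSI // joing_subr.
  have s1 : (H <*> Y) :&: Z \subset H <*> (Y1 :&: Z).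
    by rewrite claim setSI // joinSS // joing_subl.
  apply: subset_trans s1 _.
  rewrite join_subG joing_subl /= /Y1 /= (norm_joinEl nMY).
  rewrite setIC -group_modr // mulG_subG (subset_trans sMH (joing_subl _ _)) andbT.
  by rewrite setIC joing_subr.
Qed.

Lemma prime_fact2 (x y s : nat) : prime s -> (x * y = s)%N -> 1 < x -> y = 1%N.
Proof.
move=> ps E x1; case/primeP: ps => s1 dv.
have xs0 : x %| s by rewrite -E dvdn_mulr.
case/orP: (dv x xs0) => [/eqP x1'|/eqP xs]; first by rewrite x1' in x1.
apply/eqP; rewrite -(eqn_pmul2l (_ : 0 < x)); last by rewrite ltnW.
by rewrite muln1 E xs.
Qed.

Lemma three_factors (a b c p q : nat) : prime p -> prime q ->
  (a * b * c = p * q)%N -> [\/ a = 1%N, b = 1%N | c = 1%N].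
Proof.
move=> pp pq E.
have pos : (0 < p * q)%N by rewrite muln_gt0 !prime_gt0.
have a0 : 0 < a by move: pos; rewrite -E !muln_gt0 => /andP[/andP[]].
have b0 : 0 < b by move: pos; rewrite -E !muln_gt0 => /andP[/andP[]].
have c0 : 0 < c by move: pos; rewrite -E !muln_gt0 => /andP[/andP[]].
case: (ltnP 1 a) => a1; last by constructor 1; apply/eqP; rewrite eqn_leq a1 a0.
case: (ltnP 1 b) => b1; last by constructor 2; apply/eqP; rewrite eqn_leq b1 b0.
case: (ltnP 1 c) => c1; last by constructor 3; apply/eqP; rewrite eqn_leq c1 c0.
exfalso.
set r := pdiv a.
have pr : prime r := pdiv_prime a1.
have ra : r %| a := pdiv_dvd a.
case/dvdnP: ra => a' Ea.
have rpq : r %| p * q by rewrite -E Ea -!mulnA dvdn_mull // dvdn_mulr.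
have key : forall s, prime s -> (r * (a' * b * c) = r * s)%N -> False.
  move=> s ps Es.
  have Es' : ((a' * c) * b = s)%N.
    by apply/eqP; rewrite -(eqn_pmul2l (prime_gt0 pr)) -Es; apply/eqP; lia.
  have := prime_fact2 (x := b) (y := (a' * c)%N) ps; rewrite mulnC Es' => /(_ erefl b1).
  by move/eqP; rewrite muln_eq1 => /andP[_ /eqP c1']; rewrite c1' in c1.
rewrite Euclid_dvdM // !dvdn_prime2 // in rpq.
case/orP: rpq => /eqP rE.
  apply: (key q pq); rewrite Ea in E; rewrite -rE in E; lia.
apply: (key p pp); rewrite Ea in E; rewrite -rE in E; lia.
Qed.

Lemma chain_index (gT : finGroupType) (K M : {group gT}) (p q : nat) :
  prime p -> prime q -> #|K : M| = (p * q)%N ->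
  forall X Z : {group gT}, M \subset X -> X \subset Z -> Z \subset K ->
     X :=: M \/ X :=: Z \/ Z :=: K.
Proof.
move=> pp pq iK X Z sMX sXZ sZK.
have := Lagrange_index sZK (subset_trans sMX sXZ).
rewrite -(Lagrange_index sXZ sMX) mulnA iK => /(three_factors pp pq).
case=> /eqP; rewrite indexg_eq1 => s.
- by right; right; apply/eqP; rewrite eqEsubset sZK.
- by right; left; apply/eqP; rewrite eqEsubset sXZ.
- by left; apply/eqP; rewrite eqEsubset sMX andbT.
Qed.

Definition pre2 (gT : finGroupType) (R : {group gT}) (N : {group coset_of R})
  (B : {group coset_of N}) : {group gT} :=
  (coset R @*^-1 (coset N @*^-1 B))%G.

Section Pre2.
Variables (gT : finGroupType) (R : {group gT}) (N : {group coset_of R}).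

Lemma pre2S (B C : {group coset_of N}) : B \subset C -> pre2 B \subset pre2 C.
Proof. by move=> sBC; rewrite /pre2 /= !morphpreS. Qed.

Lemma card_pre2 (B : {group coset_of N}) :
  #|pre2 B| = (#|R| * (#|N| * #|B|))%N.
Proof. by rewrite /pre2 /= card_cosetpre card_cosetpre. Qed.

Lemma pre2_normal (B C : {group coset_of N}) : B <| C -> pre2 B <| pre2 C.
Proof. by move=> nBC; rewrite /pre2 /= !cosetpre_normal. Qed.

Lemma index_pre2 (B C : {group coset_of N}) :
  B \subset C -> #|pre2 C : pre2 B| = #|C : B|.
Proof.
move=> sBC; rewrite -divgS ?pre2S // -divgS // !card_pre2.
by rewrite !divnMl // cardG_gt0.
Qed.

Lemma pre2_G (G : {group gT}) : R <| G -> N <| (G / R)%G ->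
  pre2 ((G / R)%G / N)%G = G.
Proof.
move=> nsRG nsN; apply: group_inj.
by rewrite /pre2 /= quotientGK // quotientGK.
Qed.

End Pre2.

Lemma sp_dvd (I : Type) (sigma : nat -> I) (gT1 gT2 : finGroupType)
  (X : {set gT1}) (Y : {group gT2}) :
  #|X| %| #|Y| -> sigma_primary sigma Y -> sigma_primary sigma X.
Proof.
move=> dXY [i Hi]; exists i => r; rewrite mem_primes => /and3P[pr _ rX].
by apply: Hi; rewrite mem_primes pr cardG_gt0 (dvdn_trans rX dXY).
Qed.

Lemma ssn1 (I : Type) (sigma : nat -> I) (gT : finGroupType) (H K : {group gT}) :
  H \subset K -> (H <| K \/ sigma_primary sigma (K / gcore H K)) ->
  sigma_subnormal sigma H K.
Proof. by move=> sHK c; apply: ssn_step sHK c (ssn_refl _ _). Qed.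

Lemma sp_core (I : Type) (sigma : nat -> I) (gT gT2 : finGroupType)
  (H K M : {group gT}) (Y : {group gT2}) :
  M <| K -> M \subset H -> #|K : M| %| #|Y| -> sigma_primary sigma Y ->
  sigma_primary sigma (K / gcore H K).
Proof.
move=> nsMK sMH dY spY; apply: sp_dvd spY.
rewrite card_quotient ?gcore_norm //; apply: dvdn_trans dY.
by apply: indexgS; rewrite sub_gcore ?normal_norm.
Qed.

Theorem lemma2p5 (I : Type) (sigma : nat -> I) (gT : finGroupType)
  (G : {group gT}) :
  QsigmaT sigma G ->
  forall R : {group gT}, R <| G -> Q_sigma_P sigma (G / R)%G.
Proof.
move=> QT R nsRG p q N Pb nsN _ nsPb spPb [A [t [abA [pq' [_ [ot [sdP [nB _]]]]]]]] Hb sHP.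
have preG := pre2_G nsRG nsN.
suff mH : modular (pre2 Hb) G.
  have sRH : R \subset pre2 Hb by rewrite /pre2 /= -{1}(ker_coset R) ker_sub_pre.
  have m1 := quot_modular nsRG sRH mH.
  have e1 : (pre2 Hb / R)%G = (coset N @*^-1 Hb)%G.
    by apply: group_inj; rewrite /= cosetpreK.
  rewrite e1 in m1.
  have sNH : N \subset coset N @*^-1 Hb by rewrite -{1}(ker_coset N) ker_sub_pre.
  have m2 := quot_modular nsN sNH m1.
  have e2 : ((coset N @*^-1 Hb) / N)%G = Hb by apply: group_inj; rewrite /= cosetpreK.
  by rewrite e2 in m2.
suff qH : sigma_quasinormal sigma (pre2 Hb) G by case: qH.
have nsP' : pre2 Pb <| G by rewrite -{1}preG; apply: pre2_normal.
have qP : sigma_quasinormal sigma (pre2 Pb) G.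
  by split; [apply: ssn1; [exact: normal_sub | left] | apply: normal_modular].
have [nsAP sTP defP nAT tiAT] := sdprod_context sdP.
have cardP : (#|A| * q)%N = #|Pb| by rewrite -(sdprod_card sdP) -ot.
have cA := abelem_abelian abA.
have nBP : forall B : {group coset_of N}, B \subset A -> Pb \subset 'N(B).
  move=> B sBA; rewrite -defP mulG_subG sub_abelian_norm //=.
  by rewrite cycle_subG nB.
have sAP := normal_sub nsAP.
have [sHA | nsHA] := boolP (Hb \subset A).
  have nsHP : Hb <| Pb by rewrite /normal sHP nBP.
  apply: QT qP; split; first by apply: ssn1; [exact: normal_sub (pre2_normal _) | left; exact: pre2_normal].
  exact: normal_modular (pre2_normal _).
have nAH : Hb \subset 'N(A) := subset_trans sHP (nBP A (subxx _)).
have cU : #|A <*> Hb| = #|Pb|.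
  have sAU : A \subset A <*> Hb := joing_subl _ _.
  have sUP : A <*> Hb \subset Pb by rewrite join_subG sAP.
  have iPA : #|Pb : A| = q by rewrite -divgS // -cardP mulKn // cardG_gt0.
  have d := indexSg sAU sUP; rewrite iPA in d.
  case/primeP: pq' => _ /(_ _ d) /orP [/eqP i1 | /eqP iq].
    exfalso; move/eqP: i1; rewrite indexg_eq1 => sUA.
    by rewrite (subset_trans (joing_subr A Hb) sUA) in nsHA.
  by rewrite -(Lagrange sAU) iq cardP.
have cH : #|Hb| = (q * #|A :&: Hb|)%N.
  have := mul_cardG A Hb; rewrite -(norm_joinEr nAH) cU -cardP.
  by move/eqP; rewrite -mulnA eqn_pmul2l ?cardG_gt0 // => /eqP.
pose K (B : {group coset_of N}) := (B <*> Hb)%G.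
have cK : forall C : {group coset_of N}, A :&: Hb \subset C -> C \subset A ->
    #|K C| = (#|C| * q)%N.
  move=> C s0 sCA; have nCH : Hb \subset 'N(C) := subset_trans sHP (nBP C sCA).
  have e : C :&: Hb = A :&: Hb.
    by apply/eqP; rewrite eqEsubset setSI //= subsetI s0 subsetIr.
  have := mul_cardG C Hb; rewrite -(norm_joinEr nCH) e cH => E.
  apply/eqP; rewrite -(eqn_pmul2r (cardG_gt0 [group of A :&: Hb])) /= -E.
  by rewrite mulnA.
have KA : K A = Pb.
  apply: group_inj; apply/eqP; rewrite eqEcard join_subG sAP sHP /=.
  by rewrite cK ?subsetIl // cardP leqnn.
have KB0 : K [group of A :&: Hb] = Hb.
  by apply: group_inj; apply/joing_idPr; exact: subsetIr.
have main : forall n (B : {group coset_of N}), #|A| - #|B| < n ->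
    A :&: Hb \subset B -> B \subset A -> sigma_quasinormal sigma (pre2 (K B)) G.
  elim=> [//|n IH] B lt s0 sBA.
  have [sAB | /subsetPn [a aA aB]] := boolP (A \subset B).
    have -> : K B = K A.
      apply: group_inj; rewrite /= (_ : gval B = gval A) //.
      by apply/eqP; rewrite eqEsubset sBA.
    by rewrite KA.
  have a1 : a != 1 by apply: contraNneq aB => ->; exact: group1.
  have oa := abelem_order_p abA aA a1.
  have ntA : A :!=: 1 by apply/trivgPn; exists a.
  have [pp _ _] := pgroup_pdiv (abelem_pgroup abA) ntA.
  have nBa : <[a]> \subset 'N(B).
    by rewrite cycle_subG (subsetP (sub_abelian_norm cA sBA)).
  pose C := (B <*> <[a]>)%G.
  have sBC : B \subset C := joing_subl _ _.
  have sCA : C \subset A by rewrite join_subG sBA cycle_subG.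
  have cC : #|C| = (#|B| * p)%N.
    have := mul_cardG B <[a]>%G; rewrite -(norm_joinEr nBa) setIC prime_TIg.
    - by rewrite cards1 muln1 -oa => ->.
    - by rewrite -orderE oa.
    - by rewrite cycle_subG.
  have ltBC : #|B| < #|C| by rewrite cC ltn_Pmulr ?prime_gt1 ?cardG_gt0.
  have leCA : #|C| <= #|A| := subset_leq_card sCA.
  have ltn : #|A| - #|C| < n.
    move: lt ltBC leCA; move: #|A| #|B| #|C| => x y z; clear; lia.
  have qC := IH C ltn (subset_trans s0 sBC) sCA.
  apply: QT qC.
  have sKCP : K C \subset Pb by rewrite join_subG (subset_trans sCA sAP) sHP.
  have nsBKC : B <| K C.
    by rewrite /normal (subset_trans sBC (joing_subl _ _)) (subset_trans sKCP (nBP B sBA)).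
  have sKBC : K B \subset K C by apply: joinSS.
  have iKC : #|K C : B| = (p * q)%N.
    by rewrite -divgS ?normal_sub // cK ?(subset_trans s0 sBC) // cC -mulnA mulKn ?cardG_gt0.
  have sBKB : B \subset K B := joing_subl _ _.
  split.
    apply: ssn1; first exact: pre2S.
    right; apply: (sp_core (M := pre2 B)) spPb.
    - exact: pre2_normal.
    - exact: pre2S.
    - by rewrite index_pre2 ?normal_sub // (dvdn_trans (dvdn_indexg _ _) (cardSg sKCP)).
  apply: (small_modular (M := pre2 B)).
  - exact: pre2_normal.
  - exact: pre2S.
  - exact: pre2S.
  - by apply: (chain_index pp pq'); rewrite index_pre2 ?normal_sub.
have := main #|A|.+1 [group of A :&: Hb] _ (subxx _) (subsetIl _ _).
by rewrite KB0; apply; rewrite ltnS leq_subr.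
Qed.
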